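(* Let $\pi$ be a skew-merged permutation with no central elements and $\tau$ a skew-merged permutation. If $e_1$ and $e_2$ are embeddings of $\pi$ into $\tau$, then the map $e_1\wedge e_2$ defined by $(e_1\wedge e_2)(x)=\mathit{outer}\{e_1(x),e_2(x)\}$ for all points $x$ of $\pi$ is also an embedding of $\pi$ into $\tau$.
   Context: Permutations are identified with their sets of points $(i,\sigma(i))$; an embedding is an injective map between point sets preserving relative horizontal and vertical order of every pair. A permutation is skew-merged if its points can be partitioned into an increasing and a decreasing subsequence. An element is of type NE if it plays the $3$ in an occurrence of $213$, NW if it plays the $3$ in an occurrence of $312$, SW if it plays the $1$ in an occurrence of $132$, SE if it plays the $1$ in an occurrence of $231$, and central otherwise; the four non-central types are pairwise disjoint, SW and NE elements form increasing sequences, NW and SE elements form decreasing sequences, and embeddings between skew-merged permutations preserve the type of non-central elements. For two non-central elements $x,y$ of the same type, $x\lhd y$ means $x$ lies strictly further out from the centre than $y$: for type SW, $x$ is left of and below $y$; for NE, $x$ is right of and above $y$; for NW, $x$ is left of and above $y$; for SE, $x$ is right of and below $y$. $\mathit{outer}$ of two elements of the same type is the $\lhd$-minimum (the one further out), or the common element if equal. *)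

(* Defs.v *)
(* A permutation of size n is s : {perm 'I_n}; its points are
   (i, s i) for i : 'I_n, and we identify the point (i, s i) with its index i. *)
From mathcomp Require Import all_boot all_order all_fingroup.
Set Implicit Arguments. Unset Strict Implicit. Unset Printing Implicit Defensive.

Section Defs.
Variable n : nat.
Implicit Types (s : {perm 'I_n}) (x y : 'I_n).

Definition skew_merged s : bool :=
  [exists A : {set 'I_n},
     [forall i : 'I_n, forall j : 'I_n, ((i \in A) && (j \in A) && (i < j)) ==> (s i < s j)] &&
     [forall i : 'I_n, forall j : 'I_n, ((i \notin A) && (j \notin A) && (i < j)) ==> (s j < s i)]].

Definition is_NE s x : bool :=
  [exists a : 'I_n, exists b : 'I_n, [&& a < b, b < x, s b < s a & s a < s x]].
Definition is_NW s x : bool :=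
  [exists b : 'I_n, exists c : 'I_n, [&& x < b, b < c, s b < s c & s c < s x]].
Definition is_SW s x : bool :=
  [exists b : 'I_n, exists c : 'I_n, [&& x < b, b < c, s x < s c & s c < s b]].
Definition is_SE s x : bool :=
  [exists a : 'I_n, exists b : 'I_n, [&& a < b, b < x, s x < s a & s a < s b]].

Definition central s x : bool :=
  ~~ [|| is_NE s x, is_NW s x, is_SW s x | is_SE s x].

Definition lhd s x y : bool :=
  [|| [&& is_SW s x, is_SW s y, x < y & s x < s y],
      [&& is_NE s x, is_NE s y, y < x & s y < s x],
      [&& is_NW s x, is_NW s y, x < y & s y < s x]
    | [&& is_SE s x, is_SE s y, y < x & s x < s y]].

Definition outer s x y : 'I_n := if lhd s x y then x else y.
End Defs.

Definition embedding n m (p : {perm 'I_n}) (t : {perm 'I_m}) (e : 'I_n -> 'I_m) : Prop :=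
  injective e /\
  forall i j : 'I_n, (i < j) = (e i < e j) /\ (p i < p j) = (t (e i) < t (e j)).

(* Main.v *)
Require Import Defs.
From mathcomp Require Import all_boot all_order all_fingroup.
From mathcomp Require Import zify.
Set Implicit Arguments. Unset Strict Implicit. Unset Printing Implicit Defensive.

Inductive ty := tNE | tNW | tSW | tSE.

Definition isT k (s : {perm 'I_k}) (T : ty) (x : 'I_k) : bool :=
  match T with tNE => is_NE s x | tNW => is_NW s x | tSW => is_SW s x | tSE => is_SE s x end.
Definition hd T := match T with tNE | tSE => true | _ => false end.
Definition vd T := match T with tNE | tNW => true | _ => false end.

Lemma pres n m (p : {perm 'I_n}) (t : {perm 'I_m}) e T x :
  embedding p t e -> isT p T x -> isT t T (e x).
Proof.
case=> _ He; case: T => /= /existsP [a /existsP [b H]]; apply/existsP; exists (e a);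
 apply/existsP; exists (e b); move: H;
 by rewrite ?(proj1 (He a b)) ?(proj1 (He b x)) ?(proj1 (He x a)) ?(proj1 (He x b))
   ?(proj2 (He b a)) ?(proj2 (He a x)) ?(proj2 (He x a)) ?(proj2 (He b x))
   ?(proj2 (He a b)) ?(proj2 (He x b)).
Qed.

Definition mark m (i j : 'I_m) := True.

Section Tau.
Variables (m : nat) (t : {perm 'I_m}) (A : {set 'I_m}).
Hypothesis HA : forall i j : 'I_m, i \in A -> j \in A -> i < j -> t i < t j.
Hypothesis HB : forall i j : 'I_m, i \notin A -> j \notin A -> i < j -> t j < t i.

Definition inA (i : 'I_m) := i \in A.
Ltac sat := repeat match goal with
 | Hi : is_true (inA ?i), Hj : is_true (inA ?j) |- _ =>
     lazymatch goal with | _ : mark i j |- _ => fail | _ =>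
       pose proof (I : mark i j); pose proof (@HA i j Hi Hj) end
 | Hi : is_true (~~ inA ?i), Hj : is_true (~~ inA ?j) |- _ =>
     lazymatch goal with | _ : mark i j |- _ => fail | _ =>
       pose proof (I : mark i j); pose proof (@HB i j Hi Hj) end
 end.

Ltac memcase x := case: (boolP (inA x)) => ?.

Lemma clsNE x : is_NE t x -> inA x /\ exists u, ~~ inA u /\ u < x /\ t u < t x.
Proof.
move=> /existsP [a /existsP [b /and4P [h1 h2 h3 h4]]].
memcase x; memcase a; memcase b; sat; try (exfalso; lia); split => //;
 first [ by exists a; split => //; split; lia | by exists b; split => //; split; lia ].
Qed.

Lemma clsSW x : is_SW t x -> inA x /\ exists u, ~~ inA u /\ x < u /\ t x < t u.
Proof.
move=> /existsP [a /existsP [b /and4P [h1 h2 h3 h4]]].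
memcase x; memcase a; memcase b; sat; try (exfalso; lia); split => //;
 first [ by exists a; split => //; split; lia | by exists b; split => //; split; lia ].
Qed.

Lemma clsNW x : is_NW t x -> ~~ inA x /\ exists u, inA u /\ x < u /\ t u < t x.
Proof.
move=> /existsP [a /existsP [b /and4P [h1 h2 h3 h4]]].
memcase x; memcase a; memcase b; sat; try (exfalso; lia); split => //;
 first [ by exists a; split => //; split; lia | by exists b; split => //; split; lia ].
Qed.

Lemma clsSE x : is_SE t x -> ~~ inA x /\ exists u, inA u /\ u < x /\ t x < t u.
Proof.
move=> /existsP [a /existsP [b /and4P [h1 h2 h3 h4]]].
memcase x; memcase a; memcase b; sat; try (exfalso; lia); split => //;
 first [ by exists a; split => //; split; lia | by exists b; split => //; split; lia ].
Qed.

Ltac clsall := repeat match goal with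
 | H : is_true (is_NE t ?x) |- _ => case: (clsNE H) => ? [? [? [? ?]]]; clear H
 | H : is_true (is_NW t ?x) |- _ => case: (clsNW H) => ? [? [? [? ?]]]; clear H
 | H : is_true (is_SW t ?x) |- _ => case: (clsSW H) => ? [? [? [? ?]]]; clear H
 | H : is_true (is_SE t ?x) |- _ => case: (clsSE H) => ? [? [? [? ?]]]; clear H
 end.

Ltac memcontra := match goal with
  H1 : is_true (inA ?x), H2 : is_true (~~ inA ?x) |- _ => by rewrite H1 in H2 end.

Lemma disj T1 T2 x : isT t T1 x -> isT t T2 x -> T1 = T2.
Proof.
case: T1; case: T2 => //= H1 H2; clsall; try memcontra; sat; exfalso; lia.
Qed.

Lemma forcedH T1 T2 u v : hd T1 != hd T2 -> isT t T1 u -> isT t T2 v -> (u < v) = ~~ hd T1.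
Proof.
move=> Hd H1 H2; case: (ltngtP u v) => h.
- move: Hd H1 H2; case: T1; case: T2 => //= _ H1 H2; clsall; sat; lia.
- move: Hd H1 H2; case: T1; case: T2 => //= _ H1 H2; clsall; sat; lia.
- move/val_inj: h => h; subst v; by rewrite (disj H1 H2) eqxx in Hd.
Qed.

Lemma forcedV T1 T2 u v : vd T1 != vd T2 -> isT t T1 u -> isT t T2 v -> (t u < t v) = ~~ vd T1.
Proof.
move=> Hd H1 H2; case: (ltngtP (t u) (t v)) => h.
- move: Hd H1 H2; case: T1; case: T2 => //= _ H1 H2; clsall; sat; lia.
- move: Hd H1 H2; case: T1; case: T2 => //= _ H1 H2; clsall; sat; lia.
- move/val_inj/perm_inj: h => h; subst v; by rewrite (disj H1 H2) eqxx in Hd.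
Qed.

Lemma notT T T' x : isT t T x -> T' <> T -> isT t T' x = false.
Proof. by move=> H ne; apply/negbTE/negP => /disj /(_ H). Qed.

Ltac killT H x :=
  try (rewrite (_ : is_NE t x = false); last exact: (notT (T':=tNE) H ltac:(discriminate)));
  try (rewrite (_ : is_NW t x = false); last exact: (notT (T':=tNW) H ltac:(discriminate)));
  try (rewrite (_ : is_SW t x = false); last exact: (notT (T':=tSW) H ltac:(discriminate)));
  try (rewrite (_ : is_SE t x = false); last exact: (notT (T':=tSE) H ltac:(discriminate))).

Lemma outerP T u v : isT t T u -> isT t T v ->
  (outer t u v = u \/ outer t u v = v) /\
  (if hd T then (u <= outer t u v) && (v <= outer t u v)
   else (outer t u v <= u) && (outer t u v <= v)) /\
  (if vd T then (t u <= t (outer t u v)) && (t v <= t (outer t u v))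
   else (t (outer t u v) <= t u) && (t (outer t u v) <= t v)).
Proof.
move=> Hu Hv; case: (ltngtP u v) => h; last first.
  move/val_inj: h => h; subst v; rewrite /outer; case: ifP => _;
  split; (try by left); case: (hd T); case: (vd T); by rewrite !leqnn.
all: rewrite /outer /lhd.
all: case: T Hu Hv => Hu Hv.
all: killT Hu u; killT Hv v; rewrite /= in Hu Hv; rewrite ?Hu ?Hv /=.
all: clsall; sat.
all: case: ifP => HH; (split; [by [left|right] | split; lia]).
Qed.
End Tau.

Lemma sm_AB m (t : {perm 'I_m}) : skew_merged t -> exists A : {set 'I_m},
  (forall i j : 'I_m, i \in A -> j \in A -> i < j -> t i < t j) /\
  (forall i j : 'I_m, i \notin A -> j \notin A -> i < j -> t j < t i).
Proof.
case/existsP => A /andP [/forallP H1 /forallP H2]; exists A; split => i j Hi Hj Hij.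
- by move: (H1 i) => /forallP /(_ j) /implyP; apply; rewrite Hi Hj Hij.
- by move: (H2 i) => /forallP /(_ j) /implyP; apply; rewrite Hi Hj Hij.
Qed.

Lemma keymono m (c : 'I_m -> nat) (d : bool) (x1 x2 y1 y2 wx wy : 'I_m) :
  c x1 < c y1 -> c x2 < c y2 -> (wx = x1 \/ wx = x2) -> (wy = y1 \/ wy = y2) ->
  (if d then (c x1 <= c wx) && (c x2 <= c wx) else (c wx <= c x1) && (c wx <= c x2)) ->
  (if d then (c y1 <= c wy) && (c y2 <= c wy) else (c wy <= c y1) && (c wy <= c y2)) ->
  c wx < c wy.
Proof. by move=> ? ? [->|->] [->|->]; case: d; lia. Qed.

Theorem lemma3 (n m : nat) (p : {perm 'I_n}) (t : {perm 'I_m}) :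
  skew_merged p -> (forall x : 'I_n, ~~ central p x) -> skew_merged t ->
  forall e1 e2 : 'I_n -> 'I_m,
    embedding p t e1 -> embedding p t e2 ->
    embedding p t (fun x => outer t (e1 x) (e2 x)).
Proof.
move=> _ Hnc /sm_AB [A [HA HB]] e1 e2 E1 E2.
have Ty : forall x, exists T, isT p T x.
  move=> x; move: (Hnc x); rewrite /central negbK => /or4P [h|h|h|h];
  [exists tNE|exists tNW|exists tSW|exists tSE]; exact h.
have main : forall i j : 'I_n, (i < j -> outer t (e1 i) (e2 i) < outer t (e1 j) (e2 j)) /\
   (p i < p j -> t (outer t (e1 i) (e2 i)) < t (outer t (e1 j) (e2 j))).
  move=> i j; case: (Ty i) => Ti Hi; case: (Ty j) => Tj Hj.
  have H1i := pres E1 Hi; have H2i := pres E2 Hi.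
  have H1j := pres E1 Hj; have H2j := pres E2 Hj.
  have [Oi [Pi Vi]] := outerP HA HB H1i H2i.
  have [Oj [Pj Vj]] := outerP HA HB H1j H2j.
  have Fi : isT t Ti (outer t (e1 i) (e2 i)) by case: Oi => ->.
  have Fj : isT t Tj (outer t (e1 j) (e2 j)) by case: Oj => ->.
  split => ij.
  - have a1 : e1 i < e1 j by rewrite -(proj1 (E1.2 i j)).
    have a2 : e2 i < e2 j by rewrite -(proj1 (E2.2 i j)).
    case: (eqVneq (hd Ti) (hd Tj)) => hdE.
    + rewrite -hdE in Pj.
      exact: (@keymono m (fun x => nat_of_ord x) (hd Ti) _ _ _ _ _ _ a1 a2 Oi Oj Pi Pj).
    + rewrite (forcedH HA HB hdE Fi Fj); by rewrite (forcedH HA HB hdE H1i H1j) in a1.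
  - have a1 : t (e1 i) < t (e1 j) by rewrite -(proj2 (E1.2 i j)).
    have a2 : t (e2 i) < t (e2 j) by rewrite -(proj2 (E2.2 i j)).
    case: (eqVneq (vd Ti) (vd Tj)) => vdE.
    + rewrite -vdE in Vj.
      exact: (@keymono m (fun x => nat_of_ord (t x)) (vd Ti) _ _ _ _ _ _ a1 a2 Oi Oj Vi Vj).
    + rewrite (forcedV HA HB vdE Fi Fj); by rewrite (forcedV HA HB vdE H1i H1j) in a1.
split.
- move=> i j fij; case: (ltngtP i j) => h.
  + by have := (main i j).1 h; rewrite fij ltnn.
  + by have := (main j i).1 h; rewrite fij ltnn.
  + exact: val_inj h.
- move=> i j; have [P1 V1] := main i j; have [P2 V2] := main j i; split.
  + case: (ltngtP i j) => h.
    * have := P1 h; lia.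
    * have := P2 h; lia.
    * by move/val_inj: h => ->; rewrite !ltnn.
  + case: (ltngtP (p i) (p j)) => h.
    * have := V1 h; lia.
    * have := V2 h; lia.
    * by move/val_inj/perm_inj: h => ->; rewrite !ltnn.
Qed.
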